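(* Let $a<b$, $n\ge1$ an integer, $y\in C^1[a,b]$, and $x_k=a+\tfrac{k}{n}(b-a)$ for $0\le k\le n$. Then \[\sup_{x\in[a,b]}|y(x)|\le \max_{0\le k\le n-1}\Bigl\{\tfrac12\bigl|y(x_k)+y(x_{k+1})\bigr|+\tfrac12\sqrt{\tfrac{b-a}{n}}\Bigl(\int_{x_k}^{x_{k+1}}y'(t)^2\,dt\Bigr)^{1/2}\Bigr\}.\] *)

(* Defs.v *)
From Stdlib Require Import Reals Lra Lia.
From Coquelicot Require Import Coquelicot.
Open Scope R_scope.

Definition deriv_within (a b : R) (f : R -> R) (x d : R) : Prop :=
  forall eps : R, 0 < eps -> exists delta : R, 0 < delta /\
    forall t : R, a <= t <= b -> t <> x -> Rabs (t - x) < delta ->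
      Rabs ((f t - f x) / (t - x) - d) < eps.

Definition cont_on (a b : R) (g : R -> R) : Prop :=
  forall x : R, a <= x <= b ->
  forall eps : R, 0 < eps -> exists delta : R, 0 < delta /\
    forall t : R, a <= t <= b -> Rabs (t - x) < delta -> Rabs (g t - g x) < eps.

Definition C1_on (a b : R) (y y' : R -> R) : Prop :=
  (forall x : R, a <= x <= b -> deriv_within a b y x (y' x)) /\ cont_on a b y'.

Fixpoint maxk (f : nat -> R) (m : nat) : R :=
  match m with
  | O => f O
  | S p => Rmax (maxk f p) (f (S p))
  end.

Definition grid (a b : R) (n k : nat) : R := a + INR k / INR n * (b - a).

(* Main.v *)
Require Import Defs.
From Stdlib Require Import Reals Lra Lia.
From Coquelicot Require Import Coquelicot.
Open Scope R_scope.

Definition clamp (a b t : R) : R := Rmax a (Rmin b t).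

Lemma clamp_in a b t : a <= b -> a <= clamp a b t <= b.
Proof. intros; unfold clamp, Rmax, Rmin; repeat destruct Rle_dec; lra. Qed.

Lemma clamp_id a b t : a <= t <= b -> clamp a b t = t.
Proof. intros; unfold clamp, Rmax, Rmin; repeat destruct Rle_dec; lra. Qed.

Lemma clamp_lip a b t s : a <= b -> Rabs (clamp a b t - clamp a b s) <= Rabs (t - s).
Proof. intros; unfold clamp, Rmax, Rmin; repeat destruct Rle_dec;
  unfold Rabs; repeat destruct Rcase_abs; lra. Qed.

Lemma cont_clamp a b g x : a <= b -> cont_on a b g -> continuity_pt (fun t => g (clamp a b t)) x.
Proof.
  intros Hab Hg. apply continuity_pt_locally. intros eps.
  destruct (Hg (clamp a b x) (clamp_in a b x Hab) eps (cond_pos eps)) as [d [Hd H']].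
  exists (mkposreal d Hd). intros u Hu. apply H'. apply clamp_in; auto.
  unfold ball in Hu; simpl in Hu; unfold AbsRing_ball, abs, minus, plus, opp in Hu; simpl in Hu.
  eapply Rle_lt_trans. apply clamp_lip; auto. exact Hu.
Qed.

Lemma deriv_cont a b y x d : a <= x <= b -> deriv_within a b y x d ->
  forall eps, 0 < eps -> exists delta, 0 < delta /\
    forall t, a <= t <= b -> Rabs (t - x) < delta -> Rabs (y t - y x) < eps.
Proof.
  intros Hx Hd eps Heps.
  destruct (Hd 1 Rlt_0_1) as [d1 [Hd1 H1]].
  assert (Hp : 0 < Rabs d + 1) by (pose proof (Rabs_pos d); lra).
  exists (Rmin d1 (eps / (Rabs d + 1))). split.
  { apply Rmin_pos; auto. apply Rdiv_lt_0_compat; lra. }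
  intros t Ht Htx.
  destruct (Req_dec t x) as [->|Hne].
  { replace (y x - y x) with 0 by ring. rewrite Rabs_R0; auto. }
  assert (Hl1 : Rabs (t - x) < d1) by (eapply Rlt_le_trans; [exact Htx| apply Rmin_l]).
  assert (Hl2 : Rabs (t - x) < eps / (Rabs d + 1)) by (eapply Rlt_le_trans; [exact Htx| apply Rmin_r]).
  specialize (H1 t Ht Hne Hl1).
  set (q := (y t - y x) / (t - x)) in *.
  assert (Hq : Rabs q < Rabs d + 1).
  { replace q with ((q - d) + d) by ring. eapply Rle_lt_trans. apply Rabs_triang. lra. }
  replace (y t - y x) with (q * (t - x)) by (unfold q; field; lra).
  rewrite Rabs_mult.
  assert (0 <= Rabs q) by apply Rabs_pos.
  assert (0 <= Rabs (t - x)) by apply Rabs_pos.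
  apply Rle_lt_trans with ((Rabs d + 1) * Rabs (t - x)).
  { apply Rmult_le_compat_r; lra. }
  replace eps with ((Rabs d + 1) * (eps / (Rabs d + 1))) by (field; lra).
  apply Rmult_lt_compat_l; lra.
Qed.

Lemma C1_cont a b y y' : C1_on a b y y' -> cont_on a b y.
Proof.
  intros [Hd _] x Hx. apply (deriv_cont a b y x (y' x) Hx (Hd x Hx)).
Qed.

Lemma deriv_clamp a b y y' t : C1_on a b y y' -> a < t < b ->
  is_derive (fun u => y (clamp a b u)) t (y' t).
Proof.
  intros [Hd _] Ht. apply is_derive_Reals. intros eps Heps.
  destruct (Hd t ltac:(lra) eps Heps) as [d [Hdp H]].
  assert (Hp : 0 < Rmin d (Rmin (t - a) (b - t))).
  { apply Rmin_pos; auto. apply Rmin_pos; lra. }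
  exists (mkposreal _ Hp). intros h hne hlt. simpl in hlt.
  assert (h1 : Rabs h < d) by (eapply Rlt_le_trans; [exact hlt| apply Rmin_l]).
  assert (h2 : Rabs h < Rmin (t - a) (b - t)) by (eapply Rlt_le_trans; [exact hlt| apply Rmin_r]).
  assert (h3 : Rabs h < t - a) by (eapply Rlt_le_trans; [exact h2| apply Rmin_l]).
  assert (h4 : Rabs h < b - t) by (eapply Rlt_le_trans; [exact h2| apply Rmin_r]).
  apply Rabs_def2 in h3. apply Rabs_def2 in h4.
  rewrite (clamp_id a b (t + h)) by lra. rewrite (clamp_id a b t) by lra.
  specialize (H (t + h) ltac:(lra) ltac:(lra)).
  replace (t + h - t) with h in H by ring. apply H; auto.
Qed.

Lemma z_cont a b y y' x : a <= b -> C1_on a b y y' -> continuous (fun t => y' (clamp a b t)) x.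
Proof. intros Hab [_ Hc]. apply continuity_pt_filterlim. apply cont_clamp; auto. Qed.

Lemma z_exRInt a b y y' r s : a <= b -> C1_on a b y y' -> ex_RInt (fun t => y' (clamp a b t)) r s.
Proof. intros. apply (@ex_RInt_continuous R_CompleteNormedModule). intros; apply (z_cont a b y y'); auto. Qed.

Lemma ftc a b y y' r s : a < b -> C1_on a b y y' -> a <= r -> r <= s -> s <= b ->
  y s - y r = RInt (fun t => y' (clamp a b t)) r s.
Proof.
  intros Hab HC Har Hrs Hsb.
  set (z := fun t => y' (clamp a b t)).
  set (H := fun t => y (clamp a b t) - RInt z r t).
  assert (HdI : forall u, is_derive (RInt z r) u (z u)).
  { intros u. apply (@is_derive_RInt R_CompleteNormedModule z (RInt z r) r u). apply filter_forall. intros v.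
    apply RInt_correct. apply (z_exRInt a b y y'); auto; lra.
    apply (z_cont a b y y'); auto; lra. }
  destruct (MVT_gen H r s (fun _ => 0)) as [c [Hc Heq]].
  - rewrite Rmin_left, Rmax_right by lra. intros t Ht.
    unfold H. replace 0 with (y' t - z t).
    apply (is_derive_minus (fun u => y (clamp a b u)) (RInt z r)).
    apply (deriv_clamp a b y y'); auto; lra. apply HdI.
    unfold z; rewrite clamp_id by lra; ring.
  - rewrite Rmin_left, Rmax_right by lra. intros t Ht.
    unfold H. apply continuity_pt_minus.
    apply cont_clamp. lra. apply (C1_cont a b y y' HC).
    apply continuity_pt_filterlim. apply (@ex_derive_continuous R_AbsRing R_NormedModule). eexists; apply HdI.
  - unfold H in Heq. rewrite RInt_point in Heq.
    rewrite (clamp_id a b s), (clamp_id a b r) in Heq by lra.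
    unfold zero in Heq; simpl in Heq. fold z. lra.
Qed.

Lemma q_exRInt a b y y' r s : a <= b -> C1_on a b y y' ->
  ex_RInt (fun t => y' (clamp a b t) * y' (clamp a b t)) r s.
Proof.
  intros Hab [Hd Hc]. apply (@ex_RInt_continuous R_CompleteNormedModule). intros.
  apply continuity_pt_filterlim.
  apply (continuity_pt_mult (fun t => y' (clamp a b t)) (fun t => y' (clamp a b t)));
  apply cont_clamp; auto.
Qed.

Lemma pt_bound c w : 0 < c -> Rabs w <= c / 2 * (w * w) + / (2 * c).
Proof.
  intros Hc. assert (w * w = Rabs w * Rabs w).
  { rewrite <- Rabs_mult. rewrite Rabs_right; auto. apply Rle_ge, Rle_0_sqr. }
  rewrite H. set (v := Rabs w).
  assert (c / 2 * (v * v) + / (2 * c) - v = (c * v - 1) * (c * v - 1) / (2 * c)) by (field; lra).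
  assert (0 <= (c * v - 1) * (c * v - 1) / (2 * c)).
  { apply Rdiv_le_0_compat. apply Rle_0_sqr. lra. }
  lra.
Qed.

Lemma int_bound a b y y' r s c : a <= b -> C1_on a b y y' -> r <= s -> 0 < c ->
  Rabs (RInt (fun t => y' (clamp a b t)) r s) <=
  c / 2 * RInt (fun t => y' (clamp a b t) * y' (clamp a b t)) r s + (s - r) * / (2 * c).
Proof.
  intros Hab HC Hrs Hc.
  set (z := fun t => y' (clamp a b t)).
  set (q := fun t => z t * z t).
  eapply Rle_trans. apply abs_RInt_le; auto. apply (z_exRInt a b y y'); auto.
  pose proof (RInt_correct q r s (q_exRInt a b y y' r s Hab HC)) as Iq.
  pose proof (is_RInt_plus _ _ _ _ _ _ (is_RInt_scal _ _ _ (c/2) _ Iq) (is_RInt_const r s (/(2*c)))) as J.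
  pose proof (is_RInt_unique _ _ _ _ J) as E.
  unfold plus, scal in E; simpl in E; unfold mult in E; simpl in E.
  apply Rle_trans with (RInt (fun t => c / 2 * q t + / (2 * c)) r s).
  2: { rewrite E. apply Rle_refl. }
  apply RInt_le; auto.
  - apply ex_RInt_norm. apply (z_exRInt a b y y'); auto.
  - eexists; exact J.
  - intros t Ht. unfold q. apply pt_bound; auto.
Qed.

Lemma sqrt_bound D I h : 0 <= I -> 0 < h -> (forall c, 0 < c -> D <= c / 2 * I + h * / (2 * c)) ->
  D <= sqrt h * sqrt I.
Proof.
  intros HI Hh H. destruct (Req_dec I 0) as [E|NE].
  - subst. rewrite sqrt_0, Rmult_0_r.
    destruct (Rle_dec D 0) as [|N]; auto. exfalso.
    specialize (H (h / D) ltac:(apply Rdiv_lt_0_compat; lra)).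
    replace (h / D / 2 * 0 + h * / (2 * (h / D))) with (D / 2) in H by (field; lra). lra.
  - assert (0 < sqrt I) by (apply sqrt_lt_R0; lra).
    assert (0 < sqrt h) by (apply sqrt_lt_R0; lra).
    specialize (H (sqrt h / sqrt I) ltac:(apply Rdiv_lt_0_compat; lra)).
    pose proof (sqrt_sqrt I ltac:(lra)) as E1. pose proof (sqrt_sqrt h ltac:(lra)) as E2.
    set (si := sqrt I) in *. set (sh := sqrt h) in *.
    rewrite <- E1, <- E2 in H.
    replace (sh / si / 2 * (si * si) + sh * sh * / (2 * (sh / si))) with (sh * si) in H
      by (field; lra). auto.
Qed.

Lemma maxk_ge f m k : (k <= m)%nat -> f k <= maxk f m.
Proof.
  induction m; intros Hk.
  - replace k with 0%nat by lia. simpl; lra.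
  - simpl. destruct (Nat.eq_dec k (S m)) as [->|N].
    + apply Rmax_r.
    + eapply Rle_trans. apply IHm; lia. apply Rmax_l.
Qed.

Lemma grid_S a b n k : (1 <= n)%nat -> grid a b n (S k) = grid a b n k + (b - a) / INR n.
Proof.
  intros Hn. assert (0 < INR n) by (apply lt_0_INR; lia).
  unfold grid. rewrite S_INR. field. lra.
Qed.

Lemma grid_locate a b n x : a < b -> (1 <= n)%nat -> a <= x <= b ->
  exists k, (k < n)%nat /\ grid a b n k <= x <= grid a b n (S k).
Proof.
  intros Hab Hn Hx.
  assert (Hpos : 0 < INR n) by (apply lt_0_INR; lia).
  assert (Hh : 0 < (b - a) / INR n) by (apply Rdiv_lt_0_compat; lra).
  assert (P : forall m, (1 <= m)%nat -> x <= grid a b n m ->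
     exists k, (k < m)%nat /\ grid a b n k <= x <= grid a b n (S k)).
  { induction m; intros Hm Hxm. lia.
    destruct (Nat.eq_dec m 0) as [->|Nm].
    - exists 0%nat. split. lia. split; auto. unfold grid; simpl. lra.
    - destruct (Rle_dec x (grid a b n m)) as [L|L].
      + destruct (IHm ltac:(lia) L) as [k [Hk1 Hk2]]. exists k; split; auto; lia.
      + exists m. split. lia. lra. }
  apply P; auto. unfold grid. replace (INR n / INR n * (b - a)) with (b - a) by (field; lra). lra.
Qed.

Lemma grid_range a b n k : a < b -> (k < n)%nat ->
  a <= grid a b n k /\ grid a b n (S k) <= b.
Proof.
  intros Hab Hk. assert (Hpos : 0 < INR n) by (apply lt_0_INR; lia).
  assert (0 <= INR k) by apply pos_INR.
  assert (INR (S k) <= INR n) by (apply le_INR; lia).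
  unfold grid. split.
  - assert (0 <= INR k / INR n * (b - a)).
    { apply Rmult_le_pos; [apply Rdiv_le_0_compat|]; lra. } lra.
  - assert (INR (S k) / INR n <= 1).
    { apply (Rmult_le_reg_r (INR n)); auto. field_simplify; lra. }
    assert (INR (S k) / INR n * (b - a) <= 1 * (b - a)) by (apply Rmult_le_compat_r; lra). lra.
Qed.

Theorem lemma9p2 (a b : R) (n : nat) (y y' : R -> R) :
  a < b -> (1 <= n)%nat -> C1_on a b y y' ->
  forall x : R, a <= x <= b ->
    Rabs (y x) <=
    maxk (fun k : nat =>
            / 2 * Rabs (y (grid a b n k) + y (grid a b n (S k)))
            + / 2 * sqrt ((b - a) / INR n)
                  * sqrt (RInt (fun t => (y' t) ^ 2) (grid a b n k) (grid a b n (S k))))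
         (n - 1).
Proof.
  intros Hab Hn HC x Hx.
  destruct (grid_locate a b n x Hab Hn Hx) as [k [Hk Hxk]].
  destruct (grid_range a b n k Hab Hk) as [Hr1 Hr2].
  eapply Rle_trans; [| apply (maxk_ge _ (n - 1) k); lia]. cbv beta.
  set (xk := grid a b n k) in *. set (xk1 := grid a b n (S k)) in *.
  assert (Hh : 0 < (b - a) / INR n).
  { apply Rdiv_lt_0_compat. lra. apply lt_0_INR; lia. }
  assert (Ehh : xk1 - xk = (b - a) / INR n) by (unfold xk1, xk; rewrite grid_S; auto; ring).
  set (z := fun t => y' (clamp a b t)).
  set (q := fun t => z t * z t).
  assert (EI : RInt (fun t => y' t ^ 2) xk xk1 = RInt q xk xk1).
  { apply RInt_ext. rewrite Rmin_left, Rmax_right by lra. intros t Ht.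
    unfold q, z. rewrite clamp_id by lra. simpl. ring. }
  rewrite EI.
  assert (F1 : y x - y xk = RInt z xk x) by (apply (ftc a b y y'); auto; lra).
  assert (F2 : y xk1 - y x = RInt z x xk1) by (apply (ftc a b y y'); auto; lra).
  assert (Ch : RInt q xk x + RInt q x xk1 = RInt q xk xk1).
  { apply (RInt_Chasles q xk x xk1); apply (q_exRInt a b y y'); auto; lra. }
  assert (I0 : 0 <= RInt q xk xk1).
  { apply RInt_ge_0. lra. apply (q_exRInt a b y y'); auto; lra.
    intros; unfold q; apply Rle_0_sqr. }
  assert (Key : 2 * Rabs (y x) - Rabs (y xk + y xk1) <= sqrt ((b - a) / INR n) * sqrt (RInt q xk xk1)).
  { apply sqrt_bound; auto. intros c Hc.
    pose proof (int_bound a b y y' xk x c ltac:(lra) HC ltac:(lra) Hc) as B1.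
    pose proof (int_bound a b y y' x xk1 c ltac:(lra) HC ltac:(lra) Hc) as B2.
    change (RInt (fun t : R => y' (clamp a b t) * y' (clamp a b t)) xk x) with (RInt q xk x) in B1.
    change (RInt (fun t : R => y' (clamp a b t) * y' (clamp a b t)) x xk1) with (RInt q x xk1) in B2.
    assert (2 * y x = (y xk + y xk1) + RInt z xk x - RInt z x xk1) by lra.
    assert (Rabs (2 * y x) <= Rabs (y xk + y xk1) + Rabs (RInt z xk x) + Rabs (RInt z x xk1)).
    { rewrite H. unfold Rminus. eapply Rle_trans. apply Rabs_triang. rewrite Rabs_Ropp.
      pose proof (Rabs_triang (y xk + y xk1) (RInt z xk x)). lra. }
    rewrite Rabs_mult, Rabs_right in H0 by lra.
    rewrite <- Ch, <- Ehh.
    assert (c / 2 * (RInt q xk x + RInt q x xk1) + (xk1 - xk) * / (2 * c) =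
      (c / 2 * RInt q xk x + (x - xk) * / (2 * c)) + (c / 2 * RInt q x xk1 + (xk1 - x) * / (2 * c))) by ring.
    change (RInt (fun t : R => y' (clamp a b t)) x xk1) with (RInt z x xk1) in B2.
    change (RInt (fun t : R => y' (clamp a b t)) xk x) with (RInt z xk x) in B1.
    lra. }
  assert (/ 2 * sqrt ((b - a) / INR n) * sqrt (RInt q xk xk1) = / 2 * (sqrt ((b - a) / INR n) * sqrt (RInt q xk xk1))) by ring.
  lra.
Qed.
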